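(* Let $A$ be a finite set of options containing a default option $0$, and consider a finite nonempty collection of $V$ ballots as described in the context, with associated Llull matrix $v$. Let $C\subseteq A\setminus\{0\}$ be a set of clones. If some $x\in C$ is a path-revised approval choice of $v$, then every element of $C$ is a path-revised approval choice of $v$.
   Context: Each of the $V$ voters casts a ballot which, for each unordered pair $\{x,y\}$ of distinct options, expresses exactly one of: $x$ preferred to $y$; $y$ preferred to $x$; $x$ and $y$ ranked equally; no comparison. The Llull matrix is $v_{xy}=(\#\{\text{voters preferring }x\text{ to }y\}+\tfrac12\#\{\text{voters ranking }x,y\text{ equally}\})/V$ for distinct $x,y$. A set $C\subseteq A\setminus\{0\}$ is a set of clones if for every voter and every $y\in A\setminus C$ (including $y=0$), the relation expressed by that voter between $x$ and $y$ (one of the four possibilities above) is the same for all $x\in C$. Path scores: $v^*_{xy}=\max\min(v_{x_0x_1},\dots,v_{x_{m-1}x_m})$ over all paths $x_0\dots x_m$ ($m\ge1$, $x_0=x$, $x_m=y$, $x_i$ pairwise distinct). For $z\in A$ put $D(z)=v^*_{z0}-v^*_{0z}$ if $z\ne0$ and $D(0)=0$. An option $x$ is a path-revised approval choice if $D(x)\ge D(y)$ for all $y\in A\setminus\{x\}$. *)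

(* Defs.v *)
From HB Require Import structures.
From mathcomp Require Import all_boot all_order all_algebra.
Set Implicit Arguments. Unset Strict Implicit. Unset Printing Implicit Defensive.
Import Order.TTheory GRing.Theory Num.Theory.
Local Open Scope ring_scope.

(* What a ballot expresses about an ordered pair (x,y) of distinct options. *)
Inductive cmp := Pref (* x preferred to y *) | Dispref (* y preferred to x *)
               | Tie | NoCmp .

Definition cmp_flip (c : cmp) : cmp :=
  match c with Pref => Dispref | Dispref => Pref | Tie => Tie | NoCmp => NoCmp end.

Definition cmp_eqb (c d : cmp) : bool :=
  match c, d with
  | Pref, Pref | Dispref, Dispref | Tie, Tie | NoCmp, NoCmp => true
  | _, _ => false end.

Definition ballot (A : finType) := A -> A -> cmp.

Definition wf_ballot (A : finType) (b : ballot A) : Prop :=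
  forall x y : A, x != y -> b y x = cmp_flip (b x y).

Definition llull (A : finType) (V : nat) (bs : 'I_V -> ballot A) (x y : A) : rat :=
  ((#|[set i | cmp_eqb (bs i x y) Pref]|)%:R
   + (#|[set i | cmp_eqb (bs i x y) Tie]|)%:R / 2) / V%:R.

Definition clones (A : finType) (o0 : A) (V : nat) (bs : 'I_V -> ballot A)
  (C : {set A}) : Prop :=
  o0 \notin C /\
  forall (i : 'I_V) (y : A), y \notin C ->
    forall x1 x2 : A, x1 \in C -> x2 \in C -> bs i x1 y = bs i x2 y.

(* minimum of v along the path x :: t (t nonempty; values of v lie in [0,1]) *)
Definition path_min (A : finType) (v : A -> A -> rat) (x : A) (t : seq A) : rat :=
  \big[Num.min/1]_(e <- zip (x :: t) t) v e.1 e.2.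

(* path score: max over simple paths x = x_0, x_1, ..., x_m = y, m >= 1,
   pairwise distinct vertices; t = [x_1; ...; x_m] has length m <= #|A|. *)
Definition path_score (A : finType) (v : A -> A -> rat) (x y : A) : rat :=
  \big[Num.max/0]_(m < #|A|)
     \big[Num.max/0]_(t : (m.+1).-tuple A | uniq (x :: t) && (last x t == y))
        path_min v x t.

Definition Dscore (A : finType) (o0 : A) (v : A -> A -> rat) (z : A) : rat :=
  if z == o0 then 0 else path_score v z o0 - path_score v o0 z.

Definition path_revised_approval_choice (A : finType) (o0 : A)
  (v : A -> A -> rat) (x : A) : Prop :=
  forall y : A, y != x -> Dscore o0 v y <= Dscore o0 v x.

(* Main.v *)
Require Import Defs.
From HB Require Import structures.
From mathcomp Require Import all_boot all_order all_algebra.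
Import Order.TTheory GRing.Theory Num.Theory.
Local Open Scope ring_scope.

Lemma pm_cons (A : finType) (v : A -> A -> rat) x w t :
  path_min v x (w :: t) = Num.min (v x w) (path_min v w t).
Proof. by rewrite /path_min /= big_cons. Qed.

Lemma pm_le1 (A : finType) (v : A -> A -> rat) x t : path_min v x t <= 1.
Proof. exact: bigmin_le_id. Qed.

Lemma ps_ge0 (A : finType) (v : A -> A -> rat) x y : 0 <= path_score v x y.
Proof. exact: bigmax_ge_id. Qed.

Lemma ps_le (A : finType) (v : A -> A -> rat) x y x' y' :
  (forall t : seq A, uniq (x :: t) -> last x t = y -> t != [::] ->
     exists t', [/\ t' != [::], uniq (x' :: t'), last x' t' = y' &
                path_min v x t <= path_min v x' t']) ->
  path_score v x y <= path_score v x' y'.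
Proof.
move=> H; rewrite /path_score; apply: bigmax_le => [|m _]; first exact: ps_ge0.
apply: bigmax_le => [|t /andP[Hu /eqP Hl]]; first exact: ps_ge0.
have Hn : (t : seq A) != [::] by rewrite -size_eq0 size_tuple.
have [t' [Hn' Hu' Hl' Hle]] := H t Hu Hl Hn.
have Hs : ((size t').-1 < #|A|)%N.
  have := card_uniqP Hu'; have := max_card (mem (x' :: t')) => /= h1 h2.
  rewrite h2 /= in h1; exact: leq_ltn_trans (leq_pred _) h1.
have Ht : size t' == (size t').-1.+1 by rewrite prednK // lt0n size_eq0.
apply: (le_trans _ (le_bigmax_cond _ (j := Ordinal Hs) _ _)) => //=.
apply: (le_trans _ (le_bigmax_cond _ (j := Tuple Ht) _ _)) => //=.
by move: Hu' => /= ->; rewrite Hl' eqxx.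
Qed.

Lemma vclone (A : finType) (o0 : A) (V : nat) (bs : 'I_V -> ballot A) (C : {set A}) :
  (forall i, wf_ballot (bs i)) -> clones o0 bs C ->
  forall x1 x2 y, x1 \in C -> x2 \in C -> y \notin C ->
  llull bs x1 y = llull bs x2 y /\ llull bs y x1 = llull bs y x2.
Proof.
move=> wf [_ cl] x1 x2 y h1 h2 hy.
have ne : forall x, x \in C -> x != y by move=> x hx; apply/eqP=> e; rewrite -e hx in hy.
have E1 : forall c, [set i | cmp_eqb (bs i x1 y) c] = [set i | cmp_eqb (bs i x2 y) c].
  by move=> c; apply/setP => i; rewrite !inE (cl i y hy x1 x2 h1 h2).
have E2 : forall c, [set i | cmp_eqb (bs i y x1) c] = [set i | cmp_eqb (bs i y x2) c].
  by move=> c; apply/setP => i;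
   rewrite !inE (wf i x1 y (ne _ h1)) (wf i x2 y (ne _ h2)) (cl i y hy x1 x2 h1 h2).
by rewrite /llull !E1 !E2.
Qed.

Lemma fwd (A : finType) (v : A -> A -> rat) (C : {set A}) (o0 : A) :
  o0 \notin C ->
  (forall x1 x2 y, x1 \in C -> x2 \in C -> y \notin C -> v x1 y = v x2 y) ->
  forall t x, uniq (x :: t) -> last x t = o0 -> has (mem C) (x :: t) ->
  exists t', [/\ t' != [::], all (fun z => z \notin C) t', uniq t', last o0 t' = o0 &
     forall x2, x2 \in C -> path_min v x t <= path_min v x2 t'].
Proof.
move=> h0 hv; elim=> [|w t IH] x.
  by move=> _ /= ->; rewrite (negbTE h0).
move=> Hu Hl Hh.
case Hw: (has (mem C) (w :: t)).
  have [|||t' [a b c d e]] := IH w; rewrite //.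
    by case/andP: Hu.
  exists t'; split => // x2 hx2; rewrite pm_cons.
  by rewrite ge_min (e _ hx2) orbT.
have hx : x \in C.
  by move: Hh => /orP [//| h]; have : has (mem C) (w :: t) := h; rewrite Hw.
exists (w :: t); split.
- by [].
- by apply/allP => z hz; apply/negP => hc; move/negP: Hw; apply; apply/hasP; exists z.
- by case/andP: Hu.
- exact: Hl.
move=> x2 hx2; rewrite !pm_cons (hv x x2 w) //.
apply/negP => hc; by move: Hw => /=; rewrite hc.
Qed.

Lemma bwd (A : finType) (v : A -> A -> rat) (C : {set A}) :
  (forall y x1 x2, y \notin C -> x1 \in C -> x2 \in C -> v y x1 = v y x2) ->
  forall t x, x \notin C -> uniq (x :: t) -> last x t \in C ->
  exists u, [/\ all (fun z => z \notin C) u, uniq (x :: u), {subset u <= t} &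
     forall x2, x2 \in C -> path_min v x t <= path_min v x (rcons u x2)].
Proof.
move=> hv; elim=> [|w t IH] x hx.
  by move=> _ /= hc; rewrite hc in hx.
move=> Hu Hl.
case hw: (w \in C).
  exists [::]; split => // x2 hx2.
  rewrite !pm_cons (hv x w x2) // le_min ge_min lexx /= ge_min.
  have -> : path_min v x2 [::] = 1 by rewrite /path_min big_nil.
  by rewrite pm_le1 orbT.
have [|||u [a b c d]] := IH w; rewrite ?hw //.
  by case/andP: Hu.
exists (w :: u); split.
- by rewrite /= hw.
- move: Hu b => /= /andP[hxwt _] ->; rewrite andbT.
  apply: contra hxwt; rewrite !inE => /orP[->//|/c ->]; by rewrite orbT.
- by move=> z; rewrite !inE => /orP[->//|/c ->]; rewrite orbT.
move=> x2 hx2; rewrite rcons_cons !pm_cons.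
by rewrite le_min ge_min lexx /= ge_min (d _ hx2) orbT.
Qed.

Theorem theorem3p4 (A : finType) (o0 : A) (V : nat) (bs : 'I_V -> ballot A)
  (C : {set A}) :
  (0 < V)%N ->
  (forall i, wf_ballot (bs i)) ->
  clones o0 bs C ->
  (exists2 x, x \in C & path_revised_approval_choice o0 (llull bs) x) ->
  forall z, z \in C -> path_revised_approval_choice o0 (llull bs) z.
Proof.
move=> _ wf cl [x hxC hx] z hz.
have [h0 _] := cl.
set v := llull bs.
have hv1 : forall x1 x2 y, x1 \in C -> x2 \in C -> y \notin C -> v x1 y = v x2 y.
  by move=> x1 x2 y a b c; case: (@vclone A o0 V bs C wf cl _ _ _ a b c).
have hv2 : forall y x1 x2, y \notin C -> x1 \in C -> x2 \in C -> v y x1 = v y x2.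
  by move=> y x1 x2 c a b; case: (@vclone A o0 V bs C wf cl _ _ _ a b c).
have F : forall x1 x2, x1 \in C -> x2 \in C -> path_score v x1 o0 <= path_score v x2 o0.
  move=> x1 x2 h1 h2; apply: ps_le => t Hu Hl _.
  have [|t' [a b c d e]] := @fwd A v C o0 h0 hv1 _ _ Hu Hl; first by rewrite /= h1.
  exists t'; split => //.
  - rewrite /= c andbT; apply/negP => hin.
    by move/allP: b => /(_ _ hin); rewrite h2.
  - by case: t' a b c d e => // ? ?.
  - exact: e.
have B : forall x1 x2, x1 \in C -> x2 \in C -> path_score v o0 x1 <= path_score v o0 x2.
  move=> x1 x2 h1 h2; apply: ps_le => t Hu Hl _.
  have [u [a b c d]] := @bwd A v C hv2 _ _ h0 Hu (etrans (f_equal (fun q => q \in C) Hl) h1).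
  exists (rcons u x2); split.
  - by case: u {a b c d}.
  - rewrite -rcons_cons rcons_uniq b andbT inE negb_or; apply/andP; split.
      by apply/eqP=> e; rewrite -e h2 in h0.
    by apply/negP => hin; move/allP: a => /(_ _ hin); rewrite h2.
  - by rewrite last_rcons.
  - exact: d.
have D : Dscore o0 v z = Dscore o0 v x.
  have nz : forall y, y \in C -> (y == o0) = false.
    by move=> y hy; apply/negbTE/eqP => e; rewrite -e hy in h0.
  rewrite /Dscore !nz //.
  by congr (_ - _); apply/le_anti; rewrite ?F ?B.
move=> y hyz; rewrite D.
case: (eqVneq y x) => [->|hyx]; first exact: lexx.
exact: hx.
Qed.
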